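(* Let $M>0$, $\mu>0$, $m\in\mathbb{Z}\setminus\{0\}$, $n\in\{0,1,2,\dots\}$ and $l\in\{|m|,|m|+1,\dots\}$, and put $\alpha=\frac{m}{\mu M}$, $\beta=6-\frac{l(l+1)}{\mu^2M^2}$. Suppose $4<\alpha^2<6$ and $\frac{4}{100}<\beta<\frac{165}{100}$. For $a\in(0,M)$ define the polynomial $$p_a(w)=w^4+\frac{\frac{ma}{M}-i(2n+1)\sqrt{1-\frac{a^2}{M^2}}}{\mu M}\,w(w^2-1)+\left[2-\frac{l(l+1)}{\mu^2M^2}\right]w^2+3+2\sqrt{1-\frac{a^2}{M^2}},\quad w\in\mathbb{C}.$$ Then there exists $a_0\in(0,M)$ such that for every $a\in(a_0,M)$ (i.e. for $a$ sufficiently close to $M$), $p_a$ has a root in $\{w\in\mathbb{C}:|w|<1,\ \mathrm{Im}(w)<0\}$. *)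

(* Defs.v *)
From Stdlib Require Import Reals.
From Coquelicot Require Import Coquelicot.
Open Scope R_scope.

Definition p_poly (M mu : R) (m : Z) (n l : nat) (a : R) (w : C) : C :=
  let s := sqrt (1 - a ^ 2 / M ^ 2) in
  let coef : C := (Cdiv (RtoC (IZR m * a / M) - Ci * RtoC (2 * INR n + 1) * RtoC s)
                        (RtoC (mu * M)))%C in
  (w ^ 4 + coef * w * (w ^ 2 - 1)
   + RtoC (2 - INR l * (INR l + 1) / (mu ^ 2 * M ^ 2)) * w ^ 2
   + RtoC (3 + 2 * s))%C.

(* Main.v *)
From Stdlib Require Import Reals ZArith.
From Coquelicot Require Import Coquelicot.
From mathcomp Require Import Rstruct.
From mathcomp Require complex.

Module MC.
From mathcomp Require Import all_boot all_algebra complex.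
Import GRing.Theory.
Local Open Scope ring_scope.

Definition f (x : R[i]) : Coquelicot.Complex.C :=
  let: Complex a b := x in (a, b).
Definition g (z : Coquelicot.Complex.C) : R[i] := Complex (fst z) (snd z).

Lemma fg z : f (g z) = z. Proof. by case: z. Qed.
Lemma fD x y : f (x + y) = Cplus (f x) (f y). Proof. by case: x; case: y. Qed.
Lemma fM x y : f (x * y) = Cmult (f x) (f y). Proof. by case: x => a b; case: y. Qed.
Lemma f1 : f 1 = RtoC R1. Proof. by []. Qed.
Lemma f0 : f 0 = RtoC R0. Proof. by []. Qed.
Lemma fX x k : f (x ^+ k) = Cpow (f x) k.
Proof. elim: k => [|k IH]; first by []. by rewrite exprS fM IH. Qed.

Fixpoint csum (a : nat -> Coquelicot.Complex.C) (z : Coquelicot.Complex.C) (k : nat) :=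
  match k with O => RtoC R0 | S k => Cplus (csum a z k) (Cmult (a k) (Cpow z k)) end.

Lemma root_ex (n : nat) (a : nat -> Coquelicot.Complex.C) : (0 < n)%N ->
  exists z, Cpow z n = csum a z n.
Proof.
move=> n0.
have [x Hx] := @complex_acf_axiom R n (fun i => g (a i)) n0.
exists (f x); rewrite -fX Hx.
elim: n {n0 Hx} => [|k IH]; first by rewrite big_ord0.
by rewrite big_ord_recr /= fD IH fM fX fg.
Qed.
End MC.

Require Import Defs.
From Stdlib Require Import Lra Psatz.
Open Scope R_scope.
Lemma deg2 (b c : C) : exists r1 r2 : C, forall w : C,
  (w^2 + b*w + c = (w - r1) * (w - r2))%C.
Proof.
  destruct (MC.root_ex 2 (fun i => match i with 0%nat => (-c)%C | _ => (-b)%C end)) as [r Hr]; [auto|].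
  assert (E : (r^2 + b*r + c = r^2 - MC.csum (fun i => match i with 0%nat => (-c)%C | _ => (-b)%C end) r 2)%C)
    by (simpl; ring).
  rewrite <- Hr in E.
  exists r, (-(b+r))%C. intro w.
  transitivity ((w - r) * (w + (b + r)) + (r^2 + b*r + c))%C; [ring|].
  rewrite E. ring.
Qed.

Lemma deg3 (a b c : C) : exists r1 r2 r3 : C, forall w : C,
  (w^3 + a*w^2 + b*w + c = (w - r1) * (w - r2) * (w - r3))%C.
Proof.
  set (f := fun i => match i with 0%nat => (-c)%C | 1%nat => (-b)%C | _ => (-a)%C end).
  destruct (MC.root_ex 3 f) as [r Hr]; [auto|].
  assert (E : (r^3 + a*r^2 + b*r + c = r^3 - MC.csum f r 3)%C)
    by (simpl; unfold f; ring).
  rewrite <- Hr in E.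
  destruct (deg2 (a + r) (b + r*(a+r))) as [r2 [r3 H2]].
  exists r, r2, r3. intro w.
  transitivity ((w - r) * (w^2 + (a + r)*w + (b + r*(a+r))) + (r^3 + a*r^2 + b*r + c))%C; [ring|].
  rewrite E, H2. ring.
Qed.

Lemma deg4 (a b c d : C) : exists r1 r2 r3 r4 : C, forall w : C,
  (w^4 + a*w^3 + b*w^2 + c*w + d = (w - r1) * (w - r2) * (w - r3) * (w - r4))%C.
Proof.
  set (f := fun i => match i with 0%nat => (-d)%C | 1%nat => (-c)%C | 2%nat => (-b)%C | _ => (-a)%C end).
  destruct (MC.root_ex 4 f) as [r Hr]; [auto|].
  assert (E : (r^4 + a*r^3 + b*r^2 + c*r + d = r^4 - MC.csum f r 4)%C)
    by (simpl; unfold f; ring).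
  rewrite <- Hr in E.
  destruct (deg3 (a + r) (b + r*(a+r)) (c + r*(b + r*(a+r)))) as [r2 [r3 [r4 H2]]].
  exists r, r2, r3, r4. intro w.
  transitivity ((w - r) * (w^3 + (a + r)*w^2 + (b + r*(a+r))*w + (c + r*(b + r*(a+r)))) + (r^4 + a*r^3 + b*r^2 + c*r + d))%C; [ring|].
  rewrite E, H2. ring.
Qed.
Definition q0 (A g x : R) := x^4 + A*x^3 + g*x^2 - A*x + 3.

Lemma h_pos x : 0 <= x -> 0 < (1 - x^2)*(3 - x^2 - 245/100*x) + 4/100*x^2.
Proof. intros. 
assert (0 <= (x-945/1000)^2*(x^2+434/100*x+3)) by (apply Rmult_le_pos; [apply pow2_ge_0|nra]).
assert (0 <= (x-945/1000)^2) by apply pow2_ge_0.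
nra. Qed.

Lemma q0_pos_aux A g x : 0 <= A -> A^2 < 6 -> 4/100 < g + 4 -> -1 < x < 1 -> 0 < q0 A g x.
Proof.
  intros HA HA2 Hg Hx.
  assert (A < 245/100) by nra.
  assert (E : q0 A g x = (1 - x^2)*(3 - x^2 - A*x) + (g+4)*x^2) by (unfold q0; ring).
  rewrite E.
  destruct (Rle_or_lt 0 x) as [H0|H0].
  - pose proof (h_pos x H0).
    assert (0 <= 1 - x^2) by nra.
    assert ((1 - x^2)*(3 - x^2 - 245/100*x) <= (1 - x^2)*(3 - x^2 - A*x)).
    { apply Rmult_le_compat_l; nra. }
    assert (4/100*x^2 <= (g+4)*x^2) by (apply Rmult_le_compat_r; nra).
    lra.
  - assert (0 < 1 - x^2) by nra. assert (0 < 3 - x^2 - A*x) by nra.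
    assert (0 <= (g+4)*x^2) by (apply Rmult_le_pos; nra). nra.
Qed.

Lemma q0_pos A g x : A^2 < 6 -> 4/100 < g + 4 -> -1 < x < 1 -> 0 < q0 A g x.
Proof.
  intros. destruct (Rle_or_lt 0 A).
  - apply q0_pos_aux; auto.
  - replace (q0 A g x) with (q0 (-A) g (-x)) by (unfold q0; ring).
    apply q0_pos_aux; try lra; nra.
Qed.

Definition GG (A g c : R) := (c^2 + 3 - g*c)*(3-c^2)^2 - A^2*c^2*(1+c)*(3+c).

Lemma GG_root A g : 4 < A^2 < 6 -> 4/100 < g + 4 < 165/100 ->
  exists c, 1/2 <= c < 1 /\ GG A g c = 0.
Proof.
  intros HA Hg.
  destruct (IVT (fun c => - GG A g c) (1/2) 1) as [c [Hc1 Hc2]].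
  - unfold GG. reg.
  - lra.
  - unfold GG. nra.
  - unfold GG. nra.
  - exists c. split; [|lra].
    split; [lra|]. destruct Hc1 as [_ Hc1]. destruct Hc1 as [Hc1|Hc1]; auto.
    subst c. unfold GG in Hc2. nra.
Qed.
Lemma factC (a3 a2 a1 a0 b1 b0 d1 d0: R) : a3 = b1 + d1 -> a2 = b0 + d0 + b1*d1 ->
  a1 = b1*d0 + b0*d1 -> a0 = b0*d0 -> forall w : C,
  (w^4 + RtoC a3 * w^3 + RtoC a2 * w^2 + RtoC a1 * w + RtoC a0 =
   (w^2 + RtoC b1 * w + RtoC b0) * (w^2 + RtoC d1 * w + RtoC d0))%C.
Proof. intros -> -> -> -> w. rewrite !RtoC_plus, !RtoC_mult. ring. Qed.

Definition Qc (A g : R) (w : C) : C :=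
  (w^4 + RtoC A * w * (w^2 - 1) + RtoC g * w^2 + RtoC 3)%C.

Lemma z0_exists A g : 4 < A^2 < 6 -> 4/100 < g + 4 < 165/100 ->
  exists u v, 0 < v /\ u^2 + v^2 < 1 /\ Qc A g (u, Ropp v) = 0%C.
Proof.
  intros HA Hg.
  destruct (GG_root A g HA Hg) as [c [Hc HG]].
  assert (H3 : 0 < 3 - c^2) by nra.
  set (b := - A * c * (1 + c) / (3 - c^2)).
  set (d := A - b). set (e := 3 / c).
  assert (Hgc : g = c + e + b*d).
  { assert (E : GG A g c = c * (3 - c^2)^2 * (c + e + b*d - g)).
    { unfold GG, e, d, b. field. lra. }
    rewrite E in HG. apply Rmult_integral in HG as [HG|HG].
    - apply Rmult_integral in HG as [HG|HG]; [lra|]. nra.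
    - lra. }
  assert (Hw : -A = b*e + c*d).
  { unfold e, d, b. field. lra. }
  assert (Hce : 3 = c * e) by (unfold e; field; lra).
  assert (Hreal : forall x, q0 A g x = (x^2 + b*x + c)*(x^2 + d*x + e)).
  { intro x.
    assert (E : q0 A g x - (x^2 + b*x + c)*(x^2 + d*x + e) =
      (A - b - d)*x^3 + (g - (c + e + b*d))*x^2 + (-A - (b*e + c*d))*x + (3 - c*e))
      by (unfold q0; ring).
    replace (A - b - d) with 0 in E by (unfold d; ring).
    replace (g - (c + e + b*d)) with 0 in E by lra.
    replace (-A - (b*e + c*d)) with 0 in E by lra.
    replace (3 - c*e) with 0 in E by lra. lra. }
  assert (Hdisc : 0 < c - b^2/4).
  { destruct (Rlt_or_le 0 (c - b^2/4)) as [H|H]; auto. exfalso.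
    set (s := sqrt (b^2/4 - c)).
    assert (Hs : s * s = b^2/4 - c) by (apply sqrt_sqrt; lra).
    assert (Hs0 : 0 <= s) by apply sqrt_pos.
    set (x1 := -b/2 + s). set (x2 := -b/2 - s).
    assert (Hr1 : x1^2 + b*x1 + c = 0) by (unfold x1; nra).
    assert (Hr2 : x2^2 + b*x2 + c = 0) by (unfold x2; nra).
    assert (Hp : x1 * x2 = c) by (unfold x1, x2; nra).
    destruct (Rlt_or_le (Rabs x1) 1) as [H1|H1].
    - apply Rabs_def2 in H1. pose proof (q0_pos A g x1 (proj2 HA) (proj1 Hg) (conj (proj2 H1) (proj1 H1))).
      rewrite Hreal, Hr1 in H0. lra.
    - destruct (Rlt_or_le (Rabs x2) 1) as [H2|H2].
      + apply Rabs_def2 in H2. pose proof (q0_pos A g x2 (proj2 HA) (proj1 Hg) (conj (proj2 H2) (proj1 H2))).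
        rewrite Hreal, Hr2 in H0. lra.
      + assert (1 <= Rabs x1 * Rabs x2) by nra.
        rewrite <- Rabs_mult, Hp, Rabs_right in H0; lra. }
  set (u := -b/2). set (v := sqrt (c - b^2/4)).
  assert (Hv : v * v = c - b^2/4) by (apply sqrt_sqrt; lra).
  assert (Hv0 : 0 < v) by (apply sqrt_lt_R0; lra).
  exists u, v. split; [auto|]. split.
  { unfold u. nra. }
  assert (Hz : ((u, Ropp v)^2 + RtoC b * (u, Ropp v) + RtoC c = 0)%C).
  { unfold u. apply injective_projections; simpl; nra. }
  assert (EQ : (Qc A g (u, Ropp v) = ((u, Ropp v)^2 + RtoC b * (u, Ropp v) + RtoC c) * ((u, Ropp v)^2 + RtoC d * (u, Ropp v) + RtoC e))%C).
  { rewrite <- factC with (a3 := A) (a2 := g) (a1 := -A) (a0 := 3); try lra.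
    - unfold Qc. rewrite RtoC_opp. ring.
    - unfold d; ring. }
  rewrite EQ, Hz. ring.
Qed.
Lemma Cmod_le_sum x y : Cmod (x, y) <= Rabs x + Rabs y.
Proof.
  pose proof (Cmod2_alt (x, y)) as H. simpl in H. pose proof (Cmod_ge_0 (x,y)).
  pose proof (Rabs_pos x); pose proof (Rabs_pos y).
  assert (Rabs x * Rabs x = x*x) by (rewrite <- Rabs_mult; apply Rabs_right; nra).
  assert (Rabs y * Rabs y = y*y) by (rewrite <- Rabs_mult; apply Rabs_right; nra).
  apply Rsqr_incr_0_var; [|lra]. unfold Rsqr. nra.
Qed.

Lemma Im_le_Cmod z : Rabs (Im z) <= Cmod z.
Proof.
  pose proof (Cmod2_alt z). pose proof (Cmod_ge_0 z).
  apply Rsqr_incr_0_var; [|auto]. rewrite <- Rsqr_abs. unfold Rsqr. nra.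
Qed.

Lemma close_ok z0 r rho : Cmod z0 + rho <= 1 -> Im z0 + rho <= 0 -> Cmod (z0 - r) < rho ->
  Cmod r < 1 /\ Im r < 0.
Proof.
  intros H1 H2 H3.
  assert (E : r = (z0 + (-(z0 - r)))%C) by ring.
  split.
  - rewrite E. pose proof (Cmod_triangle z0 (-(z0 - r))). rewrite Cmod_opp in H. lra.
  - assert (EI : Im r = Im z0 - Im (z0 - r)) by (destruct z0, r; simpl; ring).
    pose proof (Im_le_Cmod (z0 - r)). pose proof (Rle_abs (- Im (z0-r))) as HH.
    rewrite Rabs_Ropp in HH. lra.
Qed.
Lemma coef_eq (M mu : R) (m : Z) (n : nat) (a s : R) : M <> 0 -> mu <> 0 ->
  Cdiv (RtoC (IZR m * a / M) - Ci * RtoC (2 * INR n + 1) * RtoC s) (RtoC (mu * M)) =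
  (IZR m / (mu * M) * (a / M), - ((2 * INR n + 1) * s / (mu * M))).
Proof.
  intros HM Hmu. unfold Cdiv, Cinv, Cminus, Cmult, Copp, Cplus, RtoC, Ci. simpl.
  apply injective_projections; simpl; field; split; auto.
Qed.

Lemma p_eq M mu m n l a w :
  p_poly M mu m n l a w =
  (w ^ 4 + Cdiv (RtoC (IZR m * a / M) - Ci * RtoC (2 * INR n + 1) * RtoC (sqrt (1 - a ^ 2 / M ^ 2))) (RtoC (mu * M)) * w * (w ^ 2 - 1)
   + RtoC (2 - INR l * (INR l + 1) / (mu ^ 2 * M ^ 2)) * w ^ 2
   + RtoC (3 + 2 * sqrt (1 - a ^ 2 / M ^ 2)))%C.
Proof. reflexivity. Qed.
Lemma sqrt_lt1 x : 0 <= x < 1 -> sqrt x < 1.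
Proof. intros H. rewrite <- sqrt_1. apply sqrt_lt_1_alt. lra. Qed.

Theorem mainTheorem5 (M mu : R) (m : Z) (n l : nat)
  (hM : 0 < M) (hmu : 0 < mu) (hm : m <> 0%Z)
  (hl : (Z.to_nat (Z.abs m) <= l)%nat)
  (halpha : 4 < (IZR m / (mu * M)) ^ 2 < 6)
  (hbeta : 4 / 100 < 6 - INR l * (INR l + 1) / (mu ^ 2 * M ^ 2) < 165 / 100) :
  exists a0 : R, 0 < a0 < M /\
    forall a : R, a0 < a < M ->
      exists w : C, p_poly M mu m n l a w = 0%C /\ Cmod w < 1 /\ Im w < 0.
Proof.
  set (A := IZR m / (mu * M)) in *.
  set (g := 2 - INR l * (INR l + 1) / (mu ^ 2 * M ^ 2)).
  assert (Hg : 4/100 < g + 4 < 165/100) by (unfold g; lra).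
  destruct (z0_exists A g halpha Hg) as [u [v [Hv [Huv HQ]]]].
  set (z0 := (u, Ropp v) : C) in *.
  assert (Hz0 : Cmod z0 < 1).
  { unfold Cmod, z0; simpl fst; simpl snd. apply sqrt_lt1. split; nra. }
  set (rho := Rmin (1 - Cmod z0) v).
  assert (Hrho : 0 < rho) by (unfold rho; apply Rmin_glb_lt; lra).
  assert (Hrho1 : rho <= 1 - Cmod z0) by apply Rmin_l.
  assert (Hrho2 : rho <= v) by apply Rmin_r.
  pose proof (pos_INR n) as Hn.
  assert (HmuM : 0 < mu * M) by nra.
  set (K0 := Rabs A + (2 * INR n + 1) / (mu * M)).
  assert (HK0 : 0 < K0).
  { unfold K0. pose proof (Rabs_pos A). assert (0 < (2 * INR n + 1) / (mu * M)) by (apply Rdiv_lt_0_compat; lra). lra. }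
  set (K := 2 * K0 + 2).
  assert (HK : 0 < K) by (unfold K; lra).
  assert (Hr4 : 0 < rho^4) by (apply pow_lt; lra).
  set (delta := Rmin (1/2) (rho^4 / (2*K))).
  assert (Hd0 : 0 < delta) by (unfold delta; apply Rmin_glb_lt; [lra| apply Rdiv_lt_0_compat; lra]).
  assert (Hd1 : delta <= 1/2) by apply Rmin_l.
  assert (Hd2 : delta <= rho^4 / (2*K)) by apply Rmin_r.
  set (sq := sqrt (1 - delta^2)).
  assert (Hsq0 : 0 < sq) by (apply sqrt_lt_R0; nra).
  assert (Hsq1 : sq < 1) by (unfold sq; apply sqrt_lt1; split; nra).
  assert (Hsq2 : sq * sq = 1 - delta^2) by (apply sqrt_sqrt; nra).
  exists (M * sq). split; [split; nra|].
  intros a [Ha1 Ha2].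
  set (t := a / M).
  assert (Ht0 : sq < t) by (unfold t; apply Rmult_lt_reg_r with M; [lra|]; field_simplify; lra).
  assert (Ht1 : t < 1) by (unfold t; apply Rmult_lt_reg_r with M; [lra|]; field_simplify; lra).
  assert (Eat : a ^ 2 / M ^ 2 = t^2) by (unfold t; field; lra).
  set (s := sqrt (1 - a ^ 2 / M ^ 2)).
  assert (Hs2 : s * s = 1 - t^2) by (unfold s; rewrite Eat; apply sqrt_sqrt; nra).
  assert (Hs0 : 0 <= s) by apply sqrt_pos.
  assert (Hsd : s < delta) by nra.
  assert (Hs1 : s <= 1) by nra.
  assert (Hts : 1 - t <= s * s) by nra.
  set (c1 := Cdiv (RtoC (IZR m * a / M) - Ci * RtoC (2 * INR n + 1) * RtoC s) (RtoC (mu * M))).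
  assert (Hc1 : c1 = (A * t, - ((2 * INR n + 1) * s / (mu * M)))).
  { unfold c1, A, t. apply coef_eq; lra. }
  assert (HP : forall w, p_poly M mu m n l a w =
     (w ^ 4 + c1 * w * (w ^ 2 - 1) + RtoC g * w ^ 2 + RtoC (3 + 2 * s))%C)
    by (intro w; reflexivity).
  assert (Hdelta : p_poly M mu m n l a z0 =
     ((c1 - RtoC A) * (z0 * (z0 ^ 2 - 1)) + RtoC (2 * s))%C).
  { rewrite HP. transitivity (Qc A g z0 + ((c1 - RtoC A) * (z0 * (z0 ^ 2 - 1)) + RtoC (2 * s)))%C.
    - unfold Qc. rewrite RtoC_plus. ring.
    - rewrite HQ. ring. }
  assert (Hdc : (c1 - RtoC A)%C = (A * t - A, - ((2 * INR n + 1) * s / (mu * M)))).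
  { rewrite Hc1. apply injective_projections; simpl; ring. }
  assert (Bdc : Cmod (c1 - RtoC A) <= K0 * s).
  { rewrite Hdc. eapply Rle_trans; [apply Cmod_le_sum|].
    rewrite Rabs_Ropp.
    replace (A * t - A) with (A * (t - 1)) by ring. rewrite Rabs_mult.
    rewrite (Rabs_left1 (t - 1)) by lra.
    rewrite (Rabs_right ((2 * INR n + 1) * s / (mu * M))).
    2:{ apply Rle_ge. apply Rmult_le_pos; [nra|]. left. apply Rinv_0_lt_compat. lra. }
    unfold K0. pose proof (Rabs_pos A).
    assert (Rabs A * - (t - 1) <= Rabs A * s) by (apply Rmult_le_compat_l; nra).
    unfold Rdiv. nra. }
  assert (Bz : Cmod (z0 * (z0 ^ 2 - 1)) <= 2).
  { rewrite Cmod_mult. pose proof (Cmod_ge_0 z0).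
    assert (Cmod (z0 ^ 2 - 1) <= 2).
    { unfold Cminus. eapply Rle_trans; [apply Cmod_triangle|]. rewrite Cmod_opp, Cmod_1.
      simpl. rewrite !Cmod_mult, Cmod_1. nra. }
    pose proof (Cmod_ge_0 (z0 ^ 2 - 1)). nra. }
  assert (Bp : Cmod (p_poly M mu m n l a z0) < rho ^ 4).
  { rewrite Hdelta. eapply Rle_lt_trans; [apply Cmod_triangle|].
    rewrite Cmod_mult, Cmod_R, Rabs_right by lra.
    pose proof (Cmod_ge_0 (c1 - RtoC A)). pose proof (Cmod_ge_0 (z0 * (z0 ^ 2 - 1))).
    assert (Cmod (c1 - RtoC A) * Cmod (z0 * (z0 ^ 2 - 1)) <= K0 * s * 2).
    { apply Rmult_le_compat; auto. }
    assert (K * s < rho ^ 4).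
    { assert (K * s < K * delta) by (apply Rmult_lt_compat_l; lra).
      assert (K * delta <= K * (rho ^ 4 / (2 * K))) by (apply Rmult_le_compat_l; lra).
      assert (K * (rho ^ 4 / (2 * K)) = rho^4 / 2) by (field; lra). lra. }
    unfold K in *. lra. }
  destruct (deg4 c1 (RtoC g) (- c1) (RtoC (3 + 2 * s))) as [r1 [r2 [r3 [r4 Hr]]]].
  assert (Hfac : forall w, p_poly M mu m n l a w = ((w - r1) * (w - r2) * (w - r3) * (w - r4))%C).
  { intro w. rewrite HP, <- Hr. ring. }
  assert (Hcl : forall r, Cmod (z0 - r) < rho -> Cmod r < 1 /\ Im r < 0).
  { intros r Hr'. apply (close_ok z0 r rho); auto; [lra|]. unfold z0; simpl. lra. }
  destruct (Rlt_or_le (Cmod (z0 - r1)) rho) as [H1|H1].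
  { exists r1. split; [rewrite Hfac; ring|]. auto. }
  destruct (Rlt_or_le (Cmod (z0 - r2)) rho) as [H2|H2].
  { exists r2. split; [rewrite Hfac; ring|]. auto. }
  destruct (Rlt_or_le (Cmod (z0 - r3)) rho) as [H3|H3].
  { exists r3. split; [rewrite Hfac; ring|]. auto. }
  destruct (Rlt_or_le (Cmod (z0 - r4)) rho) as [H4|H4].
  { exists r4. split; [rewrite Hfac; ring|]. auto. }
  exfalso. rewrite Hfac, !Cmod_mult in Bp.
  assert (rho * rho <= Cmod (z0 - r1) * Cmod (z0 - r2)) by (apply Rmult_le_compat; lra).
  assert (rho * rho * rho <= Cmod (z0 - r1) * Cmod (z0 - r2) * Cmod (z0 - r3))
    by (apply Rmult_le_compat; try lra; nra).
  assert (rho * rho * rho * rho <= Cmod (z0 - r1) * Cmod (z0 - r2) * Cmod (z0 - r3) * Cmod (z0 - r4))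
    by (apply Rmult_le_compat; try lra; nra).
  simpl in Bp. lra.
Qed.
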